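(* Let $\Phi=\forall u_1\ldots\forall u_n\exists e_1(D_1)\ldots\exists e_m(D_m).\varphi$ be a DQBF with prefix $\mathcal{Q}$, let $A$ be a set of arbiter variables with arbiter clauses $\varphi_A$, and let $\Phi'=\mathcal{Q}\exists A(\emptyset).\varphi\wedge\varphi_A$. Then $\Phi$ is true if and only if $\Phi'$ is true.
   Context: For a set $V$ of variables, $[V]$ is the set of assignments $V\to\{\textsc{true},\textsc{false}\}$; assignments are identified with terms of the literals they make true, $\neg\sigma$ is the clause of the negations of these literals, and $\sigma|_W$ denotes restriction. A DQBF is $\forall u_1\ldots\forall u_n\exists e_1(D_1)\ldots\exists e_m(D_m).\varphi$ with pairwise distinct variables, $U=\{u_i\}$, $E=\{e_j\}$, dependency sets $D(e_j)=D_j\subseteq U$, and $\varphi$ a CNF over $U\cup E$; a model is a family $F=(F_e)_{e}$ with $F_e:[D(e)]\to\{\textsc{true},\textsc{false}\}$ such that for every $\sigma\in[U]$, $\sigma\cup F(\sigma)$ satisfies the matrix, where $F(\sigma)$ assigns each existential $e$ the value $F_e(\sigma|_{D(e)})$; the DQBF is true iff it has a model. Arbiter variables: for $e\in E$, $\sigma\in[D(e)]$, $e^\sigma$ is a fresh variable; for a set $A$ of them, $\varphi_A=\bigwedge_{e^\sigma\in A}\big((e^\sigma\vee\neg\sigma\vee\neg e)\wedge(\neg e^\sigma\vee\neg\sigma\vee e)\big)$. For a CNF $\psi$, $\mathcal{Q}\exists A(\emptyset).\psi$ is the DQBF whose prefix is that of $\Phi$ extended by every variable of $A$ as an existential variable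 with empty dependency set, and whose matrix is $\psi$. *)

(* Defs.v *)
From mathcomp Require Import all_boot.
Set Implicit Arguments.
Unset Strict Implicit.
Unset Printing Implicit Defensive.

(* A literal over variables V is a pair (v, b); it is satisfied by an
   assignment a iff a v = b.  So (v, true) is the positive literal v and
   (v, false) is the negative literal ~v. *)
Definition lit (V : Type) := (V * bool)%type.
Definition clause (V : Type) := seq (lit V).
Definition cnf (V : Type) := seq (clause V).

Definition lit_sat (V : Type) (a : V -> bool) (l : lit V) : bool := a l.1 == l.2.
Definition clause_sat (V : Type) (a : V -> bool) (c : clause V) : bool :=
  has (lit_sat a) c.
Definition cnf_sat (V : Type) (a : V -> bool) (f : cnf V) : bool :=
  all (clause_sat a) f.

(* A DQBF  forall U  exists x (dep x) ...  . matrix,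
   with universal variables U, existential variables X (disjoint, as the sum
   type U + X enforces), dependency sets dep x \subset U and a CNF matrix over
   U + X. *)
Record dqbf (U X : finType) := DQBF {
  dep : X -> {set U};
  matrix : cnf (U + X)
}.

Definition assign (U : finType) (D : {set U}) :=
  {ffun {u : U | u \in D} -> bool}.

Definition restrict (U : finType) (s : U -> bool) (D : {set U}) : assign D :=
  [ffun x => s (val x)].

Definition ext_assign (U X : finType) (Phi : dqbf U X)
  (F : forall x : X, assign (dep Phi x) -> bool) (s : U -> bool) : U + X -> bool :=
  fun v => match v with
           | inl u => s u
           | inr x => F x (restrict s (dep Phi x))
           end.

Definition is_model (U X : finType) (Phi : dqbf U X)
  (F : forall x : X, assign (dep Phi x) -> bool) : Prop :=
  forall s : U -> bool, cnf_sat (@ext_assign U X Phi F s) (matrix Phi).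

Definition dqbf_true (U X : finType) (Phi : dqbf U X) : Prop :=
  exists F : (forall x : X, assign (dep Phi x) -> bool), @is_model U X Phi F.

(* arbiter variables e^sigma, for e in X and sigma in [D(e)] *)
Definition arb (U X : finType) (Phi : dqbf U X) : finType :=
  {e : X & assign (dep Phi e)}.

Section Arbiter.
Variables (U X : finType) (Phi : dqbf U X) (A : {set arb Phi}).

Definition Xext : finType := (X + {a : arb Phi | a \in A})%type.

Definition lift_var (v : U + X) : U + Xext :=
  match v with inl u => inl u | inr x => inr (inl x) end.

Definition neg_assign (e : X) (s : assign (dep Phi e)) : clause (U + Xext) :=
  [seq (inl (val u), ~~ s u) | u : {u : U | u \in dep Phi e}].

(* (e^s \/ ~s \/ ~e) /\ (~e^s \/ ~s \/ e) *)
Definition arb_clauses (a : {a : arb Phi | a \in A}) : cnf (U + Xext) :=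
  [:: (inr (inr a), true) :: (inr (inl (tag (val a))), false)
        :: neg_assign (tagged (val a));
      (inr (inr a), false) :: (inr (inl (tag (val a))), true)
        :: neg_assign (tagged (val a))].

Definition phiA : cnf (U + Xext) :=
  flatten [seq arb_clauses a | a : {a : arb Phi | a \in A}].

Definition dep_ext (x : Xext) : {set U} :=
  match x with inl x => dep Phi x | inr _ => set0 end.

Definition arbiter_ext : dqbf U Xext :=
  DQBF dep_ext (map (map (fun l => (lift_var l.1, l.2))) (matrix Phi) ++ phiA).

End Arbiter.

(* Main.v *)
Require Import Defs.
From mathcomp Require Import all_boot.

Lemma cnf_sat_ext (V : Type) (a b : V -> bool) (m : cnf V) :
  a =1 b -> cnf_sat a m = cnf_sat b m.
Proof.
move=> ab; apply: eq_all => c; apply: eq_has => l.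
by rewrite /lit_sat ab.
Qed.

Lemma cnf_sat_map (V W : Type) (f : V -> W) (a : W -> bool) (m : cnf V) :
  cnf_sat a (map (map (fun l => (f l.1, l.2))) m) = cnf_sat (a \o f) m.
Proof.
rewrite /cnf_sat all_map; apply: eq_all => c.
by rewrite /= /clause_sat has_map; apply: eq_has => l.
Qed.

Lemma neg_assign_sat (U X : finType) (Phi : dqbf U X) (A : {set arb Phi})
  (e : X) (sg : assign (dep Phi e)) (a : U + Xext A -> bool) :
  restrict (fun u => a (inl u)) (dep Phi e) != sg ->
  clause_sat a (neg_assign A sg).
Proof.
move=> neq; rewrite /clause_sat /neg_assign has_map.
apply/hasP.
have [u hu] : exists u, a (inl (val u)) != sg u.
  apply/existsP; move: neq; apply: contraR; rewrite negb_exists => /forallP H.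
  apply/eqP/ffunP => u; rewrite ffunE; have := H u; by rewrite negbK => /eqP.
exists u; first by rewrite mem_enum.
by rewrite /lit_sat /=; case: (a _) hu; case: (sg u).
Qed.

Theorem lemma10 (U X : finType) (Phi : dqbf U X) (A : {set arb Phi}) :
  dqbf_true Phi <-> dqbf_true (arbiter_ext A).
Proof.
split.
- move=> [F HF].
  pose F' : forall x : Xext A, assign (dep (arbiter_ext A) x) -> bool :=
    fun x => match x as x0 return assign (dep (arbiter_ext A) x0) -> bool with
             | inl x => F x
             | inr a => fun _ => F (tag (val a)) (tagged (val a)) end.
  exists F' => s.
  rewrite /cnf_sat all_cat; apply/andP; split.
    rewrite -/(cnf_sat _ _) cnf_sat_map.
    by rewrite (@cnf_sat_ext _ _ (ext_assign F s)) ?HF // => -[u|x].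
  apply/allP => c /flatten_mapP [a _].
  rewrite /arb_clauses !inE => /orP [] /eqP -> /=;
  (have [Heq|Hne] := eqVneq (restrict s (dep Phi (tag (sval a)))) (tagged (sval a)));
  [ by rewrite /lit_sat /= Heq; case: (F _ _)
  | apply/orP; right; apply/orP; right; exact: neg_assign_sat
  | by rewrite /lit_sat /= Heq; case: (F _ _)
  | apply/orP; right; apply/orP; right; exact: neg_assign_sat ].
- move=> [F' HF'].
  exists (fun x => F' (inl x)) => s.
  have := HF' s; rewrite /cnf_sat /= all_cat => /andP [H _].
  move: H; rewrite -/(cnf_sat _ _) cnf_sat_map.
  by rewrite (@cnf_sat_ext _ _ (@ext_assign _ _ Phi (fun x => F' (inl x)) s)) // => -[u|x].
Qed.
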